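(* Consider the stochastic learning dynamics described in the context, with $K\ge 2$ arms, Poisson clock rate $\lambda>0$, and parameters $1\ge p_1>p_2\ge\cdots\ge p_K\ge 0$. For any $\delta\in(0,1]$, $\mu\in(0,1]$, $p_1\in(0,1]$ and $p_2\neq 0$, the success event $E^N=\{\lim_{t\to\infty}X^N(t)=(0,N,0,\dots,0)\}$ satisfies \[ \mathbb{P}\{E^N\}\ \ge\ 1-\Big(\frac{p_1}{p_2}\Big)^{-(1-\delta)\frac{\mu p_1}{K e}N}-e^{-\frac{\mu p_1}{K e}\frac{\delta^2}{2}N}, \] where $e\approx 2.7183$ is Euler's number.
   Context: Learning dynamics: there are $K\ge 2$ arms; each pull of arm $k\in\{1,\dots,K\}$ yields an independent Bernoulli$(p_k)$ reward, where $1\ge p_1>p_2\ge\cdots\ge p_K\ge 0$ (arm 1 is the unique best arm); a ''null arm'' $0$ always yields reward $0$. There are $N$ individuals, each with an independent Poisson clock of rate $\lambda>0$ and a memory variable $M\in\{0,1,\dots,K\}$, initially $M=0$ for every individual. Fix $\mu\in(0,1]$. When an individual's clock ticks, it selects an arm $c\in\{0,\dots,K\}$ as follows: if its $M=0$, then with probability $\mu$ it sets $c$ uniformly at random in $\{1,\dots,K\}$, and with probability $1-\mu$ it picks a peer uniformly at random among all $N$ individuals (including itself) and sets $c$ to that peer's memory value; if its $M\neq 0$, it always picks a peer uniformly at random (including itself) and sets $c$ to that peer's memory value. It then pulls arm $c$, and if the reward is $1$ it sets $M\leftarrow c$ (otherwise $M$ is unchanged). Let $X^N(t)=(X^N_0(t),\dots,X^N_K(t))$,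 where $X^N_k(t)$ is the number of individuals whose memory equals $k$ at time $t$; $X^N(0)=(N,0,\dots,0)$. Equivalently, $X^N$ is the continuous-time Markov chain on nonnegative integer vectors summing to $N$ that, from state $s$, jumps to $s+e^k$ at rate $s_0\lambda(\frac{\mu}{K}+(1-\mu)\frac{s_k}{N})p_k$ for $k=1,\dots,K$, and to $s+e^k-e^{k'}$ at rate $s_{k'}\lambda\frac{s_k}{N}p_k$ for distinct $k,k'\in\{1,\dots,K\}$, where $e^k$ is the $k$-th unit vector (coordinates indexed from $0$). *)

(* Defs.v *)
From Stdlib Require Import Reals List Arith.
From Coquelicot Require Import Coquelicot.
Open Scope R_scope.

(* A state is a configuration s : nat -> nat, where s i (0 <= i <= K) is the
   number of individuals whose memory equals i (coordinate 0 = null arm).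
   Coordinates > K are never touched. *)

Definition sumR (l : list nat) (f : nat -> R) : R :=
  fold_right (fun i acc => f i + acc) 0 l.

Definition arms (K : nat) : list nat := seq 1 K.

Definition move (s : nat -> nat) (k k' : nat) : nat -> nat :=
  fun i => if Nat.eqb i k then S (s i)
           else if Nat.eqb i k' then Nat.pred (s i) else s i.

(* rate of the jump s -> s + e^k - e^0 (an individual with M = 0 learns arm k) *)
Definition rate_in (K N : nat) (lam mu : R) (p : nat -> R) (s : nat -> nat)
  (k : nat) : R :=
  INR (s 0%nat) * lam * (mu / INR K + (1 - mu) * (INR (s k) / INR N)) * p k.

(* rate of the jump s -> s + e^k - e^{k'}, k <> k' in {1..K} *)
Definition rate_sw (N : nat) (lam : R) (p : nat -> R) (s : nat -> nat)
  (k k' : nat) : R :=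
  INR (s k') * lam * (INR (s k) / INR N) * p k.

Definition others (K k : nat) : list nat :=
  filter (fun k' => negb (Nat.eqb k' k)) (arms K).

Definition total_rate (K N : nat) (lam mu : R) (p : nat -> R) (s : nat -> nat) : R :=
  sumR (arms K) (fun k => rate_in K N lam mu p s k)
  + sumR (arms K) (fun k => sumR (others K k) (fun k' => rate_sw N lam p s k k')).

Definition init_state (N : nat) : nat -> nat :=
  fun i => if Nat.eqb i 0 then N else 0%nat.

Definition is_target (K N : nat) (s : nat -> nat) : bool :=
  forallb (fun i => Nat.eqb (s i) (if Nat.eqb i 1 then N else 0%nat)) (seq 0 (S K)).

(* reach K N lam mu p n s = probability that the embedded jump chain of X^N,
   started at s and stopped when it reaches an absorbing state (total rate 0),
   is at the target (0,N,0,...,0) after n jumps. *)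
Fixpoint reach (K N : nat) (lam mu : R) (p : nat -> R) (n : nat)
  (s : nat -> nat) : R :=
  match n with
  | O => if is_target K N s then 1 else 0
  | S n' =>
      let tot := total_rate K N lam mu p s in
      if Req_EM_T tot 0 then reach K N lam mu p n' s
      else
        (sumR (arms K) (fun k =>
            rate_in K N lam mu p s k * reach K N lam mu p n' (move s k 0%nat))
         + sumR (arms K) (fun k => sumR (others K k) (fun k' =>
            rate_sw N lam p s k k' * reach K N lam mu p n' (move s k k'))))
        / tot
  end.

(* On the finite state space, X^N(t) converges to the absorbing target iff the
   jump chain hits the target, whose probability is the (monotone) limit of
   reach ... n (init_state N). *)
Definition success_prob (K N : nat) (lam mu : R) (p : nat -> R) : R :=
  real (Lim_seq (fun n => reach K N lam mu p n (init_state N))).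

(* Main.v *)
Require Import Defs.
From Stdlib Require Import Reals Lra Lia List Classical.
From Coquelicot Require Import Coquelicot.
Open Scope R_scope.


Lemma sumR_cons a l f : sumR (a :: l) f = f a + sumR l f. Proof. reflexivity. Qed.

Lemma sumR_le l f g : (forall x, In x l -> f x <= g x) -> sumR l f <= sumR l g.
Proof. induction l; simpl; intros H. lra. pose proof (H a (or_introl eq_refl)).
  assert (sumR l f <= sumR l g) by (apply IHl; auto). lra. Qed.

Lemma sumR_ext l f g : (forall x, In x l -> f x = g x) -> sumR l f = sumR l g.
Proof. induction l; simpl; intros H. lra. rewrite H by auto. rewrite IHl by auto. lra. Qed.

Lemma sumR_zero l : sumR l (fun _ => 0) = 0.
Proof. induction l; simpl; lra. Qed.

Lemma sumR_nonneg l f : (forall x, In x l -> 0 <= f x) -> 0 <= sumR l f.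
Proof. intros H. rewrite <- (sumR_zero l). apply sumR_le; auto. Qed.

Lemma sumR_plus l f g : sumR l (fun x => f x + g x) = sumR l f + sumR l g.
Proof. induction l; simpl; lra. Qed.

Lemma sumR_scal l c f : sumR l (fun x => c * f x) = c * sumR l f.
Proof. induction l; simpl. lra. rewrite IHl; lra. Qed.

Lemma sumR_const l c : sumR l (fun _ => c) = INR (length l) * c.
Proof. induction l; simpl length. simpl; lra. rewrite sumR_cons, IHl, S_INR. lra. Qed.

Lemma sumR_ge_term l f x : (forall y, In y l -> 0 <= f y) -> In x l -> f x <= sumR l f.
Proof. induction l; simpl; intros H Hx. contradiction.
  destruct Hx as [<-|Hx].
  - assert (0 <= sumR l f) by (apply sumR_nonneg; auto). lra.
  - assert (f x <= sumR l f) by (apply IHl; auto). specialize (H a (or_introl eq_refl)). lra. Qed.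

Lemma sumR_zero_inv l f : (forall y, In y l -> 0 <= f y) -> sumR l f = 0 -> forall x, In x l -> f x = 0.
Proof. intros H H0 x Hx. pose proof (sumR_ge_term l f x H Hx). pose proof (H x Hx). lra. Qed.

Lemma sumR_le_const l f M : (forall x, In x l -> f x <= M) -> sumR l f <= INR (length l) * M.
Proof. intros H. rewrite <- sumR_const. apply sumR_le; auto. Qed.

Lemma sumR_minus l f g : sumR l (fun x => f x - g x) = sumR l f - sumR l g.
Proof. induction l; simpl; lra. Qed.

Definition cnt (x : nat) (l : list nat) : R := sumR l (fun i => if Nat.eqb i x then 1 else 0).

Lemma cnt_seq x a n : (a <= x < a + n)%nat -> cnt x (seq a n) = 1.
Proof. revert a. induction n; intros a H. lia. simpl seq. unfold cnt; rewrite sumR_cons; fold (cnt x (seq (S a) n)).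
  destruct (Nat.eqb_spec a x).
  - subst. assert (cnt x (seq (S x) n) = 0).
    { unfold cnt. transitivity (sumR (seq (S x) n) (fun _ => 0)); [|apply sumR_zero]. apply sumR_ext. intros y Hy.
      apply in_seq in Hy. destruct (Nat.eqb_spec y x); [lia|auto]. }
    rewrite H0. lra.
  - rewrite (IHn (S a)) by lia. lra. Qed.

Lemma INR_move s k k' i : k <> k' -> (1 <= s k')%nat ->
  INR (move s k k' i) = INR (s i) + (if Nat.eqb i k then 1 else 0) - (if Nat.eqb i k' then 1 else 0).
Proof. intros Hk Hs. unfold move. destruct (Nat.eqb_spec i k).
  - subst. destruct (Nat.eqb_spec k k'); [lia|]. rewrite S_INR. lra.
  - destruct (Nat.eqb_spec i k').
    + subst. destruct (s k') eqn:E; [lia|]. simpl Nat.pred. rewrite S_INR. lra.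
    + lra. Qed.

Lemma sum_move l s k k' : k <> k' -> (1 <= s k')%nat ->
  sumR l (fun i => INR (move s k k' i)) = sumR l (fun i => INR (s i)) + cnt k l - cnt k' l.
Proof. intros Hk Hs. rewrite (sumR_ext l _ (fun i => (INR (s i) + (if Nat.eqb i k then 1 else 0)) - (if Nat.eqb i k' then 1 else 0))).
  - rewrite sumR_minus, sumR_plus. unfold cnt. lra.
  - intros. rewrite INR_move by auto. lra. Qed.


Definition Hyp K N lam mu (p:nat->R) : Prop := (2 <= K)%nat /\ (1 <= N)%nat /\ 0 < lam /\ 0 < mu <= 1 /\ 0 < p 1%nat <= 1 /\ p 2%nat <> 0 /\ p 1%nat > p 2%nat /\ (forall k, (2 <= k)%nat -> (k < K)%nat -> p k >= p (S k)) /\ p K >= 0.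

Lemma p_chain K (p : nat -> R) : (forall k, (2 <= k)%nat -> (k < K)%nat -> p k >= p (S k)) ->
  forall d j, (2 <= j)%nat -> (j + d <= K)%nat -> p (j + d)%nat <= p j.
Proof. intros H d. induction d; intros j Hj Hd. rewrite Nat.add_0_r; lra.
  specialize (IHd j Hj ltac:(lia)). specialize (H (j + d)%nat ltac:(lia) ltac:(lia)).
  replace (j + S d)%nat with (S (j + d)) by lia. lra. Qed.

Lemma p_mid K N lam mu p k : Hyp K N lam mu p -> (2 <= k <= K)%nat -> p K <= p k <= p 2%nat.
Proof. intros (HK&HN&Hl&Hm&Hp1&Hp2&H12&Hmon&HpK) Hk. split.
  - replace K with (k + (K - k))%nat at 1 by lia. apply (p_chain K); auto; lia.
  - replace k with (2 + (k - 2))%nat at 1 by lia. apply (p_chain K); auto; lia. Qed.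

Lemma in_arms K k : In k (arms K) <-> (1 <= k <= K)%nat.
Proof. unfold arms. rewrite in_seq. lia. Qed.

Lemma p_arm K N lam mu p k : Hyp K N lam mu p -> In k (arms K) -> 0 <= p k <= p 1%nat.
Proof. intros H Hk. apply in_arms in Hk. pose proof H as (HK&HN&Hl&Hm&Hp1&Hp2&H12&Hmon&HpK).
  destruct (Nat.eq_dec k 1). subst. lra. pose proof (p_mid K N lam mu p k H ltac:(lia)). lra. Qed.

Lemma p2_pos K N lam mu p : Hyp K N lam mu p -> 0 < p 2%nat.
Proof. intros H. pose proof H as (HK&HN&Hl&Hm&Hp1&Hp2&H12&Hmon&HpK).
  pose proof (p_mid K N lam mu p 2 H ltac:(lia)). lra. Qed.

Lemma in_others K k k' : In k' (others K k) <-> In k' (arms K) /\ k' <> k.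
Proof. unfold others. rewrite filter_In. destruct (Nat.eqb_spec k' k); simpl; intuition. Qed.

Lemma INR_N_pos K N lam mu p : Hyp K N lam mu p -> 0 < INR N.
Proof. intros (HK&HN&_). apply lt_0_INR; lia. Qed.
Lemma INR_K_pos K N lam mu p : Hyp K N lam mu p -> 0 < INR K.
Proof. intros (HK&HN&_). apply lt_0_INR; lia. Qed.

Lemma rate_in_nonneg K N lam mu p s k : Hyp K N lam mu p -> In k (arms K) -> 0 <= rate_in K N lam mu p s k.
Proof. intros H Hk. pose proof (p_arm _ _ _ _ _ _ H Hk). pose proof (INR_N_pos _ _ _ _ _ H).
  pose proof (INR_K_pos _ _ _ _ _ H). pose proof H as (HK&HN&Hl&Hm&_).
  unfold rate_in. apply Rmult_le_pos; [|lra]. apply Rmult_le_pos; [apply Rmult_le_pos; [apply pos_INR|lra]|].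
  apply Rplus_le_le_0_compat. apply Rlt_le, Rdiv_lt_0_compat; lra.
  apply Rmult_le_pos; [lra|]. apply Rmult_le_pos. apply pos_INR. apply Rlt_le, Rinv_0_lt_compat; lra. Qed.

Lemma rate_sw_nonneg K N lam mu p s k k' : Hyp K N lam mu p -> In k (arms K) -> 0 <= rate_sw N lam p s k k'.
Proof. intros H Hk. pose proof (p_arm _ _ _ _ _ _ H Hk). pose proof (INR_N_pos _ _ _ _ _ H).
  pose proof H as (HK&HN&Hl&Hm&_).
  unfold rate_sw. apply Rmult_le_pos; [|lra]. apply Rmult_le_pos; [apply Rmult_le_pos; [apply pos_INR|lra]|].
  apply Rmult_le_pos. apply pos_INR. apply Rlt_le, Rinv_0_lt_compat; lra. Qed.

Lemma sw_sum_nonneg K N lam mu p s : Hyp K N lam mu p ->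
  0 <= sumR (arms K) (fun k => sumR (others K k) (fun k' => rate_sw N lam p s k k')).
Proof. intros H. apply sumR_nonneg. intros k Hk. apply sumR_nonneg. intros. eapply rate_sw_nonneg; eauto. Qed.

Lemma in_sum_nonneg K N lam mu p s : Hyp K N lam mu p ->
  0 <= sumR (arms K) (fun k => rate_in K N lam mu p s k).
Proof. intros H. apply sumR_nonneg. intros k Hk. apply rate_in_nonneg; auto. Qed.

Lemma tot_nonneg K N lam mu p s : Hyp K N lam mu p -> 0 <= total_rate K N lam mu p s.
Proof. intros H. unfold total_rate. pose proof (sw_sum_nonneg K N lam mu p s H). pose proof (in_sum_nonneg K N lam mu p s H). lra. Qed.

Definition Inv K N (s : nat -> nat) : Prop := sumR (seq 0 (S K)) (fun i => INR (s i)) = INR N.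

Lemma inv_move K N s k k' : Inv K N s -> k <> k' -> (k <= K)%nat -> (k' <= K)%nat -> (1 <= s k')%nat -> Inv K N (move s k k').
Proof. intros H Hk H1 H2 H3. unfold Inv in *. rewrite sum_move by auto. rewrite !cnt_seq by lia. lra. Qed.

Lemma inv_in K N lam mu p s k : Hyp K N lam mu p -> Inv K N s -> In k (arms K) -> rate_in K N lam mu p s k <> 0 -> Inv K N (move s k 0).
Proof. intros H Hs Hk Hr. apply in_arms in Hk. apply inv_move; auto; try lia.
  destruct (s 0%nat) eqn:E; [|lia]. exfalso; apply Hr. unfold rate_in. rewrite E. simpl. ring. Qed.

Lemma inv_sw K N lam mu p s k k' : Hyp K N lam mu p -> Inv K N s -> In k (arms K) -> In k' (others K k) -> rate_sw N lam p s k k' <> 0 -> Inv K N (move s k k').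
Proof. intros H Hs Hk Hk' Hr. apply in_others in Hk'. destruct Hk' as [Hk' Hne]. apply in_arms in Hk. apply in_arms in Hk'.
  apply inv_move; auto; try lia.
  destruct (s k') eqn:E; [|lia]. exfalso; apply Hr. unfold rate_sw. rewrite E. simpl. ring. Qed.


Definition SumIn K N lam mu p s (f : (nat -> nat) -> R) :=
  sumR (arms K) (fun k => rate_in K N lam mu p s k * f (move s k 0%nat)).
Definition SumSw K N lam (mu : R) p s (f : (nat -> nat) -> R) :=
  sumR (arms K) (fun k => sumR (others K k) (fun k' => rate_sw N lam p s k k' * f (move s k k'))).
Definition Top K N lam mu p (f : (nat -> nat) -> R) s : R :=
  if Req_EM_T (total_rate K N lam mu p s) 0 then f s
  else (SumIn K N lam mu p s f + SumSw K N lam mu p s f) / total_rate K N lam mu p s.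

Fixpoint Titer K N lam mu p n (f : (nat -> nat) -> R) s : R :=
  match n with O => f s | S n => Top K N lam mu p (Titer K N lam mu p n f) s end.

Lemma SumIn_ext K N lam mu p s f g : (forall s', f s' = g s') -> SumIn K N lam mu p s f = SumIn K N lam mu p s g.
Proof. intros H. unfold SumIn. apply sumR_ext. intros. rewrite H; auto. Qed.
Lemma SumSw_ext K N lam mu p s f g : (forall s', f s' = g s') -> SumSw K N lam mu p s f = SumSw K N lam mu p s g.
Proof. intros H. unfold SumSw. apply sumR_ext. intros. apply sumR_ext. intros. rewrite H; auto. Qed.

Lemma Top_ext K N lam mu p f g s : (forall s', f s' = g s') -> Top K N lam mu p f s = Top K N lam mu p g s.
Proof. intros H. unfold Top. rewrite (SumIn_ext _ _ _ _ _ _ f g H), (SumSw_ext _ _ _ _ _ _ f g H), H. reflexivity. Qed.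

Lemma Top_abs K N lam mu p f s : total_rate K N lam mu p s = 0 -> Top K N lam mu p f s = f s.
Proof. intros H. unfold Top. destruct (Req_EM_T _ 0); [auto|contradiction]. Qed.

Lemma SumIn_lin K N lam mu p s a b f g : SumIn K N lam mu p s (fun x => a * f x + b * g x) = a * SumIn K N lam mu p s f + b * SumIn K N lam mu p s g.
Proof. unfold SumIn. rewrite <- !sumR_scal, <- sumR_plus. apply sumR_ext. intros. ring. Qed.
Lemma SumSw_lin K N lam mu p s a b f g : SumSw K N lam mu p s (fun x => a * f x + b * g x) = a * SumSw K N lam mu p s f + b * SumSw K N lam mu p s g.
Proof. unfold SumSw. rewrite <- !sumR_scal, <- sumR_plus. apply sumR_ext. intros.
  rewrite <- !sumR_scal, <- sumR_plus. apply sumR_ext. intros. ring. Qed.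

Lemma Top_lin K N lam mu p a b f g s : Top K N lam mu p (fun x => a * f x + b * g x) s = a * Top K N lam mu p f s + b * Top K N lam mu p g s.
Proof. unfold Top. destruct (Req_EM_T _ 0). auto. rewrite SumIn_lin, SumSw_lin. field. auto. Qed.

Lemma SumIn_const K N lam mu p s c : SumIn K N lam mu p s (fun _ => c) = c * sumR (arms K) (fun k => rate_in K N lam mu p s k).
Proof. unfold SumIn. rewrite <- sumR_scal. apply sumR_ext. intros; ring. Qed.
Lemma SumSw_const K N lam mu p s c : SumSw K N lam mu p s (fun _ => c) = c * sumR (arms K) (fun k => sumR (others K k) (fun k' => rate_sw N lam p s k k')).
Proof. unfold SumSw. rewrite <- sumR_scal. apply sumR_ext. intros. rewrite <- sumR_scal. apply sumR_ext. intros; ring. Qed.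

Lemma Top_const K N lam mu p c s : Top K N lam mu p (fun _ => c) s = c.
Proof. unfold Top. destruct (Req_EM_T _ 0). auto. rewrite SumIn_const, SumSw_const. unfold total_rate in *. field. auto. Qed.

Lemma Top_mono K N lam mu p f g s : Hyp K N lam mu p -> Inv K N s -> (forall s', Inv K N s' -> f s' <= g s') ->
  Top K N lam mu p f s <= Top K N lam mu p g s.
Proof. intros H Hs Hfg. unfold Top. destruct (Req_EM_T _ 0). auto.
  pose proof (tot_nonneg K N lam mu p s H). unfold Rdiv. apply Rmult_le_compat_r. 
  apply Rlt_le, Rinv_0_lt_compat; lra.
  apply Rplus_le_compat.
  - unfold SumIn. apply sumR_le. intros k Hk. pose proof (rate_in_nonneg K N lam mu p s k H Hk).
    destruct (Req_EM_T (rate_in K N lam mu p s k) 0) as [E|E]. rewrite E; lra.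
    apply Rmult_le_compat_l; auto. apply Hfg. eapply inv_in; eauto.
  - unfold SumSw. apply sumR_le. intros k Hk. apply sumR_le. intros k' Hk'.
    pose proof (rate_sw_nonneg K N lam mu p s k k' H Hk).
    destruct (Req_EM_T (rate_sw N lam p s k k') 0) as [E|E]. rewrite E; lra.
    apply Rmult_le_compat_l; auto. apply Hfg. eapply inv_sw; eauto. Qed.

Lemma Top_nonneg K N lam mu p f s : Hyp K N lam mu p -> (forall s', 0 <= f s') -> 0 <= Top K N lam mu p f s.
Proof. intros H Hf. unfold Top. destruct (Req_EM_T _ 0). auto.
  pose proof (tot_nonneg K N lam mu p s H). apply Rmult_le_pos; [|apply Rlt_le, Rinv_0_lt_compat; lra].
  apply Rplus_le_le_0_compat.
  - apply sumR_nonneg. intros k Hk. apply Rmult_le_pos; auto. apply rate_in_nonneg; auto.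
  - apply sumR_nonneg. intros k Hk. apply sumR_nonneg. intros. apply Rmult_le_pos; auto. eapply rate_sw_nonneg; eauto. Qed.

Lemma Top_ge_in K N lam mu p f s k : Hyp K N lam mu p -> (forall s', 0 <= f s') -> total_rate K N lam mu p s <> 0 ->
  In k (arms K) -> rate_in K N lam mu p s k / total_rate K N lam mu p s * f (move s k 0%nat) <= Top K N lam mu p f s.
Proof. intros H Hf Ht Hk. unfold Top. destruct (Req_EM_T _ 0). contradiction.
  pose proof (tot_nonneg K N lam mu p s H). unfold Rdiv.
  rewrite (Rmult_comm (rate_in _ _ _ _ _ _ _)), Rmult_assoc, (Rmult_comm (/ _)).
  apply Rmult_le_compat_r. apply Rlt_le, Rinv_0_lt_compat; lra.
  assert (0 <= SumSw K N lam mu p s f).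
  { apply sumR_nonneg. intros k0 Hk0. apply sumR_nonneg. intros. apply Rmult_le_pos; auto. eapply rate_sw_nonneg; eauto. }
  assert (rate_in K N lam mu p s k * f (move s k 0%nat) <= SumIn K N lam mu p s f).
  { unfold SumIn. apply (sumR_ge_term _ (fun k => rate_in K N lam mu p s k * f (move s k 0%nat))); auto.
    intros. apply Rmult_le_pos; auto. apply rate_in_nonneg; auto. }
  lra. Qed.

Lemma Top_ge_sw K N lam mu p f s k k' : Hyp K N lam mu p -> (forall s', 0 <= f s') -> total_rate K N lam mu p s <> 0 ->
  In k (arms K) -> In k' (others K k) -> rate_sw N lam p s k k' / total_rate K N lam mu p s * f (move s k k') <= Top K N lam mu p f s.
Proof. intros H Hf Ht Hk Hk'. unfold Top. destruct (Req_EM_T _ 0). contradiction.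
  pose proof (tot_nonneg K N lam mu p s H). unfold Rdiv.
  rewrite (Rmult_comm (rate_sw _ _ _ _ _ _)), Rmult_assoc, (Rmult_comm (/ _)).
  apply Rmult_le_compat_r. apply Rlt_le, Rinv_0_lt_compat; lra.
  assert (0 <= SumIn K N lam mu p s f).
  { apply sumR_nonneg. intros k0 Hk0. apply Rmult_le_pos; auto. apply rate_in_nonneg; auto. }
  assert (rate_sw N lam p s k k' * f (move s k k') <= SumSw K N lam mu p s f).
  { unfold SumSw. eapply Rle_trans; [|apply (sumR_ge_term _ _ k)]; auto.
    - apply (sumR_ge_term _ (fun k' => rate_sw N lam p s k k' * f (move s k k'))); auto.
      intros. apply Rmult_le_pos; auto. eapply rate_sw_nonneg; eauto.
    - intros. apply sumR_nonneg. intros. apply Rmult_le_pos; auto. eapply rate_sw_nonneg; eauto. }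
  lra. Qed.

Lemma Titer_ext K N lam mu p n f g s : (forall s', f s' = g s') -> Titer K N lam mu p n f s = Titer K N lam mu p n g s.
Proof. revert s. induction n; intros s H; simpl. auto. apply Top_ext. intros. apply IHn; auto. Qed.

Lemma Titer_abs K N lam mu p n f s : total_rate K N lam mu p s = 0 -> Titer K N lam mu p n f s = f s.
Proof. intros H. induction n; simpl. auto. rewrite Top_abs; auto. Qed.

Lemma Titer_lin K N lam mu p n a b f g s : Titer K N lam mu p n (fun x => a * f x + b * g x) s = a * Titer K N lam mu p n f s + b * Titer K N lam mu p n g s.
Proof. revert s. induction n; intros s; simpl. auto. rewrite <- Top_lin. apply Top_ext. auto. Qed.

Lemma Titer_const K N lam mu p n c s : Titer K N lam mu p n (fun _ => c) s = c.
Proof. revert s. induction n; intros s; simpl. auto. transitivity (Top K N lam mu p (fun _ => c) s); [apply Top_ext; auto|apply Top_const]. Qed.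

Lemma Titer_mono K N lam mu p n f g s : Hyp K N lam mu p -> Inv K N s -> (forall s', Inv K N s' -> f s' <= g s') ->
  Titer K N lam mu p n f s <= Titer K N lam mu p n g s.
Proof. intros H. revert s. induction n; intros s Hs Hfg; simpl. auto. apply Top_mono; auto. Qed.

Lemma Titer_nonneg K N lam mu p n f s : Hyp K N lam mu p -> (forall s', 0 <= f s') -> 0 <= Titer K N lam mu p n f s.
Proof. intros H Hf. revert s. induction n; intros s; simpl. auto. apply Top_nonneg; auto. Qed.

Lemma Titer_add K N lam mu p a b f s : Titer K N lam mu p (a + b) f s = Titer K N lam mu p a (Titer K N lam mu p b f) s.
Proof. revert s. induction a; intros s; simpl. auto. apply Top_ext. auto. Qed.

Definition ind_tgt K N (s : nat -> nat) : R := if is_target K N s then 1 else 0.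

Lemma reach_Tn K N lam mu p n s : reach K N lam mu p n s = Titer K N lam mu p n (ind_tgt K N) s.
Proof. revert s. induction n; intros s. reflexivity.
  change (Top K N lam mu p (reach K N lam mu p n) s = Top K N lam mu p (Titer K N lam mu p n (ind_tgt K N)) s).
  apply Top_ext. auto. Qed.


Lemma arms_split K : (1 <= K)%nat -> arms K = 1%nat :: seq 2 (K - 1).
Proof. intros H. destruct K. lia. unfold arms. simpl. rewrite Nat.sub_0_r. reflexivity. Qed.

Lemma filter_id {A} (f : A -> bool) l : (forall x, In x l -> f x = true) -> filter f l = l.
Proof. induction l; simpl; intros H. auto. rewrite H by auto. rewrite IHl; auto. Qed.

Lemma others_1 K : (1 <= K)%nat -> others K 1 = seq 2 (K - 1).
Proof. intros H. unfold others. rewrite arms_split by auto. simpl. apply filter_id.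
  intros x Hx. apply in_seq in Hx. destruct (Nat.eqb_spec x 1); [lia|auto]. Qed.

Lemma others_k K k : (1 <= K)%nat -> (2 <= k)%nat -> others K k = 1%nat :: filter (fun k' => negb (Nat.eqb k' k)) (seq 2 (K - 1)).
Proof. intros H Hk. unfold others. rewrite arms_split by auto. simpl.
  destruct k as [|[|k]]; [lia|lia|]. reflexivity. Qed.

Lemma inv_split K N s : (1 <= K)%nat -> Inv K N s ->
  INR (s 0%nat) + INR (s 1%nat) + sumR (seq 2 (K - 1)) (fun i => INR (s i)) = INR N.
Proof. intros H Hs. unfold Inv in Hs. destruct K. lia. simpl in Hs. replace (S K - 1)%nat with K by lia. destruct K; simpl in *; lra. Qed.

Lemma div_lt1 x y : 0 < y -> x < y -> x / y < 1.
Proof. intros Hy Hx. apply (Rmult_lt_reg_r y); auto. unfold Rdiv. rewrite Rmult_assoc, Rinv_l; lra. Qed.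
Lemma div_le1 x y : 0 < y -> x <= y -> x / y <= 1.
Proof. intros Hy Hx. apply (Rmult_le_reg_r y); auto. unfold Rdiv. rewrite Rmult_assoc, Rinv_l; lra. Qed.

Definition rr (p : nat -> R) := p 2%nat / p 1%nat.
Definition aa K mu p := 1 - mu / INR K * (1 - rr p).
Definition GG K mu p (s : nat -> nat) := rr p ^ (s 1%nat) * aa K mu p ^ (s 0%nat).

Lemma rr_bounds K N lam mu p : Hyp K N lam mu p -> 0 < rr p < 1.
Proof. intros H. pose proof (p2_pos K N lam mu p H). pose proof H as (HK&HN&Hl&Hm&Hp1&Hp2&H12&_).
  unfold rr. split. apply Rdiv_lt_0_compat; lra. apply div_lt1; lra. Qed.

Lemma aa_bounds K N lam mu p : Hyp K N lam mu p -> 0 <= aa K mu p <= 1.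
Proof. intros H. pose proof (rr_bounds K N lam mu p H). pose proof (INR_K_pos K N lam mu p H).
  pose proof H as (HK&HN&Hl&Hm&_). unfold aa.
  assert (0 < mu / INR K <= 1).
  { split. apply Rdiv_lt_0_compat; lra. apply div_le1; auto. assert (1 <= INR K) by (apply (le_INR 1); lia). lra. }
  nra. Qed.

Lemma GG_nonneg K N lam mu p s : Hyp K N lam mu p -> 0 <= GG K mu p s.
Proof. intros H. pose proof (rr_bounds K N lam mu p H). pose proof (aa_bounds K N lam mu p H).
  unfold GG. apply Rmult_le_pos; apply pow_le; lra. Qed.


Lemma key_in K N lam mu p s : Hyp K N lam mu p -> Inv K N s ->
  mu / INR K * sumR (arms K) (fun k => rate_in K N lam mu p s k) <= rate_in K N lam mu p s 1%nat.
Proof. intros H Hs. pose proof H as (HK&HN&Hl&Hm&Hp1&_).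
  pose proof (INR_K_pos K N lam mu p H). pose proof (INR_N_pos K N lam mu p H).
  pose proof (inv_split K N s ltac:(lia) Hs).
  rewrite arms_split by lia. rewrite sumR_cons.
  set (x := INR (s 0%nat) * lam * p 1%nat).
  assert (Hx : 0 <= x). { unfold x. apply Rmult_le_pos; [apply Rmult_le_pos|]; try lra. apply pos_INR. }
  set (S2 := seq 2 (K - 1)).
  assert (Ro : sumR S2 (fun k => rate_in K N lam mu p s k) <=
     sumR S2 (fun k => x * (mu / INR K) + (x * (1 - mu) / INR N) * INR (s k))).
  { apply sumR_le. intros k Hk. unfold S2 in Hk. apply in_seq in Hk.
    assert (Hpk : 0 <= p k <= p 1%nat). { apply (p_arm K N lam mu p k H). apply in_arms. lia. }
    unfold rate_in.
    assert (0 <= INR (s 0%nat) * lam * (mu / INR K + (1 - mu) * (INR (s k) / INR N))).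
    { apply Rmult_le_pos. apply Rmult_le_pos. apply pos_INR. lra.
      apply Rplus_le_le_0_compat. apply Rlt_le, Rdiv_lt_0_compat; lra.
      apply Rmult_le_pos. lra. apply Rmult_le_pos. apply pos_INR. apply Rlt_le, Rinv_0_lt_compat; lra. }
    apply Rle_trans with (INR (s 0%nat) * lam * (mu / INR K + (1 - mu) * (INR (s k) / INR N)) * p 1%nat).
    apply Rmult_le_compat_l; lra. unfold x. right. field. lra. }
  rewrite sumR_plus, sumR_const, sumR_scal in Ro. unfold S2 in Ro. rewrite length_seq in Ro.
  rewrite minus_INR in Ro by lia. simpl INR in Ro at 1.
  assert (R1 : rate_in K N lam mu p s 1%nat = x * (mu / INR K) + (x * (1 - mu) / INR N) * INR (s 1%nat)).
  { unfold rate_in, x. field. lra. }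
  rewrite R1.
  set (T := sumR (seq 2 (K - 1)) (fun i => INR (s i))) in *.
  assert (Hsum : INR (s 1%nat) + T <= INR N). { pose proof (pos_INR (s 0%nat)). lra. }
  assert (Hs1: 0 <= INR (s 1%nat)) by apply pos_INR.
  assert (HmK : 0 < mu / INR K) by (apply Rdiv_lt_0_compat; lra).
  assert (Hc : 0 <= x * (1 - mu) / INR N). { apply Rmult_le_pos. apply Rmult_le_pos; lra. apply Rlt_le, Rinv_0_lt_compat; lra. }
  assert (Htot : x * (mu / INR K) + x * (1 - mu) / INR N * INR (s 1%nat) + ((INR K - 1) * (x * (mu / INR K)) + x * (1 - mu) / INR N * T) <= x).
  { replace (x * (mu / INR K) + x * (1 - mu) / INR N * INR (s 1%nat) + ((INR K - 1) * (x * (mu / INR K)) + x * (1 - mu) / INR N * T))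
      with (x * mu + x * (1 - mu) / INR N * (INR (s 1%nat) + T)) by (field; lra).
    assert (Hq: x * (1 - mu) / INR N * (INR (s 1%nat) + T) <= x * (1 - mu) / INR N * INR N) by (apply Rmult_le_compat_l; lra).
    replace (x * (1 - mu) / INR N * INR N) with (x * (1 - mu)) in Hq by (field; lra). lra. }
  assert (mu / INR K * (x * (mu / INR K) + x * (1 - mu) / INR N * INR (s 1%nat) + sumR (seq 2 (K - 1)) (fun k => rate_in K N lam mu p s k)) <= mu / INR K * x).
  { apply Rmult_le_compat_l. lra. change (INR 1) with 1 in Ro. lra. }
  assert (0 <= x * (1 - mu) / INR N * INR (s 1%nat)) by (apply Rmult_le_pos; lra).
  assert (mu / INR K * x = x * (mu/INR K)) by ring. unfold S2 in *. lra. Qed.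

Lemma G_in K N lam mu p s : Hyp K N lam mu p -> Inv K N s ->
  SumIn K N lam mu p s (GG K mu p) <= sumR (arms K) (fun k => rate_in K N lam mu p s k) * GG K mu p s.
Proof. intros H Hs. pose proof H as (HK&HN&Hl&Hm&Hp1&_).
  pose proof (key_in K N lam mu p s H Hs) as Hkey.
  pose proof (rr_bounds K N lam mu p H). pose proof (aa_bounds K N lam mu p H).
  destruct (s 0%nat) as [|m] eqn:E0.
  - assert (Hz : forall k, rate_in K N lam mu p s k = 0). { intros k. unfold rate_in. rewrite E0. simpl. ring. }
    unfold SumIn. rewrite (sumR_ext _ _ (fun _ => 0)). rewrite (sumR_ext _ (fun k => rate_in K N lam mu p s k) (fun _ => 0)).
    rewrite sumR_zero. lra. intros; auto. intros; rewrite Hz; ring.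
  - set (X := rr p ^ (s 1%nat) * aa K mu p ^ m).
    assert (HX : 0 <= X). { unfold X. apply Rmult_le_pos; apply pow_le; lra. }
    assert (G1 : GG K mu p (move s 1 0) = rr p * X).
    { unfold GG, move, X. simpl. rewrite E0. simpl. ring. }
    assert (Gk : forall k, In k (seq 2 (K - 1)) -> GG K mu p (move s k 0) = X).
    { intros k Hk. apply in_seq in Hk. unfold GG, move, X.
      destruct (Nat.eqb_spec 1 k); [lia|]. destruct (Nat.eqb_spec 0 k); [lia|]. simpl. rewrite E0. reflexivity. }
    assert (Gs : GG K mu p s = aa K mu p * X). { unfold GG, X. rewrite E0. simpl. ring. }
    unfold SumIn. rewrite arms_split in * by lia. rewrite !sumR_cons in *. rewrite G1, Gs.
    rewrite (sumR_ext _ _ (fun k => X * rate_in K N lam mu p s k)) by (intros; rewrite Gk; auto; ring).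
    rewrite sumR_scal.
    set (R1 := rate_in K N lam mu p s 1%nat) in *.
    set (Ro := sumR (seq 2 (K - 1)) (fun k => rate_in K N lam mu p s k)) in *.
    assert (0 <= Ro). { apply sumR_nonneg. intros k Hk. apply rate_in_nonneg; auto. apply in_arms. apply in_seq in Hk. lia. }
    assert (0 <= R1). { apply rate_in_nonneg; auto. apply in_arms. lia. }
    unfold aa in *.
    assert (0 <= (1 - rr p) * (R1 - mu / INR K * (R1 + Ro)) * X).
    { apply Rmult_le_pos; auto. apply Rmult_le_pos; lra. }
    nra. Qed.

Lemma G_sw K N lam mu p s : Hyp K N lam mu p ->
  SumSw K N lam mu p s (GG K mu p) <= sumR (arms K) (fun k => sumR (others K k) (fun k' => rate_sw N lam p s k k')) * GG K mu p s.
Proof. intros H. pose proof H as (HK&HN&Hl&Hm&Hp1&_).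
  pose proof (rr_bounds K N lam mu p H). pose proof (aa_bounds K N lam mu p H).
  pose proof (INR_N_pos K N lam mu p H).
  assert (E: SumSw K N lam mu p s (GG K mu p) - sumR (arms K) (fun k => sumR (others K k) (fun k' => rate_sw N lam p s k k')) * GG K mu p s
     = sumR (arms K) (fun k => sumR (others K k) (fun k' => rate_sw N lam p s k k' * (GG K mu p (move s k k') - GG K mu p s)))).
  { unfold SumSw. rewrite Rmult_comm, <- sumR_scal, <- sumR_minus. apply sumR_ext; intros.
    rewrite <- sumR_scal, <- sumR_minus. apply sumR_ext; intros. ring. }
  cut (sumR (arms K) (fun k => sumR (others K k) (fun k' => rate_sw N lam p s k k' * (GG K mu p (move s k k') - GG K mu p s))) <= 0).
  { lra. }
  clear E. rewrite arms_split by lia. rewrite sumR_cons, others_1 by lia.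
  rewrite (sumR_ext (seq 2 (K - 1)) (fun k => sumR (others K k) (fun k' => rate_sw N lam p s k k' * (GG K mu p (move s k k') - GG K mu p s))) (fun k => rate_sw N lam p s k 1 * (GG K mu p (move s k 1) - GG K mu p s))).
  2:{ intros k Hk. apply in_seq in Hk. cbv beta. rewrite others_k by lia. rewrite sumR_cons.
      rewrite (sumR_ext _ _ (fun _ => 0)). rewrite sumR_zero. ring.
      intros k' Hk'. apply filter_In in Hk'. destruct Hk' as [Hk' Hne]. apply in_seq in Hk'.
      destruct (Nat.eqb_spec k' k); [discriminate|].
      assert (GG K mu p (move s k k') = GG K mu p s).
      { unfold GG, move. destruct (Nat.eqb_spec 1 k); [lia|]. destruct (Nat.eqb_spec 1 k'); [lia|].
        destruct (Nat.eqb_spec 0 k); [lia|]. destruct (Nat.eqb_spec 0 k'); [lia|]. reflexivity. }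
      rewrite H3. ring. }
  rewrite <- sumR_plus. apply Rle_trans with (sumR (seq 2 (K - 1)) (fun _ => 0)); [|rewrite sumR_zero; lra]. apply sumR_le.
  intros j Hj. apply in_seq in Hj.
  assert (Hpj : p j <= p 2%nat) by (apply (p_mid K N lam mu p j H); lia).
  assert (Hp12 : p 1%nat * rr p = p 2%nat) by (unfold rr; field; lra).
  destruct (s 1%nat) as [|m] eqn:E1.
  - unfold rate_sw. rewrite E1. simpl. lra.
  - assert (G1 : GG K mu p (move s 1 j) = rr p * rr p * (rr p ^ m * aa K mu p ^ (s 0%nat))).
    { assert (M1 : move s 1 j 1 = S (S m)) by (unfold move; simpl; rewrite E1; reflexivity).
      assert (M0 : move s 1 j 0 = s 0%nat).
      { unfold move. destruct (Nat.eqb_spec 0 1); [lia|]. destruct (Nat.eqb_spec 0 j); [lia|]. reflexivity. }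
      unfold GG. rewrite M1, M0. simpl. ring. }
    assert (G2 : GG K mu p (move s j 1) = (rr p ^ m * aa K mu p ^ (s 0%nat))).
    { unfold GG, move. destruct (Nat.eqb_spec 1 j); [lia|]. destruct (Nat.eqb_spec 0 j); [lia|]. simpl.
      rewrite E1. reflexivity. }
    assert (G0 : GG K mu p s = rr p * (rr p ^ m * aa K mu p ^ (s 0%nat))).
    { unfold GG. rewrite E1. simpl. ring. }
    rewrite G1, G2, G0. unfold rate_sw. rewrite E1.
    set (W := rr p ^ m * aa K mu p ^ (s 0%nat)).
    assert (0 <= W) by (unfold W; apply Rmult_le_pos; apply pow_le; lra).
    set (Z := INR (s j) * lam * INR (S m) / INR N * W).
    assert (0 <= Z). { unfold Z. apply Rmult_le_pos; auto. apply Rmult_le_pos. apply Rmult_le_pos. apply Rmult_le_pos. apply pos_INR. lra. apply pos_INR. apply Rlt_le, Rinv_0_lt_compat; lra. }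
    replace (INR (s j) * lam * (INR (S m) / INR N) * p 1%nat * (rr p * rr p * W - rr p * W) +
      INR (S m) * lam * (INR (s j) / INR N) * p j * (W - rr p * W)) with (Z * (1 - rr p) * (p j - p 1%nat * rr p)) by (unfold Z; field; lra).
    rewrite Hp12. assert (0 <= Z * (1 - rr p)) by (apply Rmult_le_pos; lra). nra. Qed.

Lemma Top_G K N lam mu p s : Hyp K N lam mu p -> Inv K N s -> Top K N lam mu p (GG K mu p) s <= GG K mu p s.
Proof. intros H Hs. unfold Top. destruct (Req_EM_T _ 0). lra.
  pose proof (tot_nonneg K N lam mu p s H).
  pose proof (G_in K N lam mu p s H Hs). pose proof (G_sw K N lam mu p s H).
  assert (Ht : 0 < total_rate K N lam mu p s) by lra.
  apply Rle_trans with (total_rate K N lam mu p s * GG K mu p s / total_rate K N lam mu p s).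
  - unfold Rdiv. apply Rmult_le_compat_r. apply Rlt_le, Rinv_0_lt_compat; lra.
    unfold total_rate. lra.
  - right. field. lra. Qed.

Lemma Titer_G K N lam mu p n s : Hyp K N lam mu p -> Inv K N s -> Titer K N lam mu p n (GG K mu p) s <= GG K mu p s.
Proof. intros H. revert s. induction n; intros s Hs; simpl. lra.
  apply Rle_trans with (Top K N lam mu p (GG K mu p) s). apply Top_mono; auto. apply Top_G; auto. Qed.


Lemma tot_ge_in K N lam mu p s k : Hyp K N lam mu p -> In k (arms K) -> rate_in K N lam mu p s k <= total_rate K N lam mu p s.
Proof. intros H Hk. unfold total_rate. pose proof (sw_sum_nonneg K N lam mu p s H).
  assert (rate_in K N lam mu p s k <= sumR (arms K) (fun k => rate_in K N lam mu p s k)).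
  { apply (sumR_ge_term _ (fun k => rate_in K N lam mu p s k)); auto. intros; apply rate_in_nonneg; auto. }
  lra. Qed.

Lemma tot_ge_sw K N lam mu p s k k' : Hyp K N lam mu p -> In k (arms K) -> In k' (others K k) -> rate_sw N lam p s k k' <= total_rate K N lam mu p s.
Proof. intros H Hk Hk'. unfold total_rate. pose proof (in_sum_nonneg K N lam mu p s H).
  assert (rate_sw N lam p s k k' <= sumR (arms K) (fun k => sumR (others K k) (fun k' => rate_sw N lam p s k k'))).
  { eapply Rle_trans; [|apply (sumR_ge_term _ _ k)]; auto.
    - apply (sumR_ge_term _ (fun k' => rate_sw N lam p s k k')); auto. intros; eapply rate_sw_nonneg; eauto.
    - intros. apply sumR_nonneg. intros. eapply rate_sw_nonneg; eauto. }
  lra. Qed.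

Lemma tot_zero K N lam mu p s : (forall k, In k (arms K) -> rate_in K N lam mu p s k = 0) ->
  (forall k k', In k (arms K) -> In k' (others K k) -> rate_sw N lam p s k k' = 0) -> total_rate K N lam mu p s = 0.
Proof. intros H1 H2. unfold total_rate.
  rewrite (sumR_ext (arms K) (fun k => rate_in K N lam mu p s k) (fun _ => 0)) by auto.
  rewrite (sumR_ext (arms K) (fun k => sumR (others K k) (fun k' => rate_sw N lam p s k k')) (fun _ => 0)). rewrite !sumR_zero. ring.
  intros k Hk. rewrite (sumR_ext _ _ (fun _ => 0)). apply sumR_zero. intros; apply H2; auto. Qed.

Lemma inv_le K N s i : Inv K N s -> (i <= K)%nat -> (s i <= N)%nat.
Proof. intros Hs Hi. apply INR_le. rewrite <- Hs.
  apply (sumR_ge_term _ (fun i => INR (s i))). intros; apply pos_INR. apply in_seq. lia. Qed.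

Lemma sumR_two l f i j : NoDup l -> (forall y, In y l -> 0 <= f y) -> In i l -> In j l -> i <> j -> f i + f j <= sumR l f.
Proof. induction l; intros Hnd Hf Hi Hj Hne. contradiction. inversion Hnd; subst. rewrite sumR_cons.
  destruct Hi as [<-|Hi]; destruct Hj as [<-|Hj].
  - contradiction.
  - assert (Hf2 : forall y, In y l -> 0 <= f y) by (intros y Hy; apply Hf; right; exact Hy). pose proof (sumR_ge_term l f j Hf2 Hj). lra.
  - assert (Hf2 : forall y, In y l -> 0 <= f y) by (intros y Hy; apply Hf; right; exact Hy). pose proof (sumR_ge_term l f i Hf2 Hi). lra.
  - assert (Hf2 : forall y, In y l -> 0 <= f y) by (intros y Hy; apply Hf; right; exact Hy). pose proof (IHl H2 Hf2 Hi Hj Hne). pose proof (Hf a (or_introl eq_refl)). lra. Qed.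

Lemma inv_two K N s i j : Inv K N s -> (i <= K)%nat -> (j <= K)%nat -> i <> j -> (s i + s j <= N)%nat.
Proof. intros Hs Hi Hj Hne. apply INR_le. rewrite plus_INR, <- Hs. apply (sumR_two _ (fun i => INR (s i))); auto.
  apply seq_NoDup. intros; apply pos_INR. apply in_seq; lia. apply in_seq; lia. Qed.

Definition Lam K N lam := INR K * (INR N * lam) + INR K * (INR K * (INR N * lam)).

Lemma tot_le K N lam mu p s : Hyp K N lam mu p -> Inv K N s -> total_rate K N lam mu p s <= Lam K N lam.
Proof. intros H Hs. pose proof H as (HK&HN&Hl&Hm&Hp1&_).
  pose proof (INR_K_pos K N lam mu p H). pose proof (INR_N_pos K N lam mu p H).
  assert (HK1 : 1 <= INR K) by (apply (le_INR 1); lia).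
  assert (Hle : forall i, In i (arms K) -> INR (s i) <= INR N).
  { intros i Hi. apply in_arms in Hi. apply le_INR. apply (inv_le K); auto; lia. }
  assert (Hle0 : INR (s 0%nat) <= INR N) by (apply le_INR, (inv_le K); auto; lia).
  unfold total_rate, Lam. apply Rplus_le_compat.
  - replace (INR K * (INR N * lam)) with (INR (length (arms K)) * (INR N * lam)) by (unfold arms; rewrite length_seq; auto).
    apply sumR_le_const.
    intros k Hk. pose proof (p_arm K N lam mu p k H Hk). pose proof (Hle k Hk). unfold rate_in.
    assert (0 <= INR (s k) / INR N <= 1). { split. apply Rmult_le_pos. apply pos_INR. apply Rlt_le, Rinv_0_lt_compat; lra. apply div_le1; lra. }
    assert (mu / INR K <= mu). { apply Rmult_le_reg_r with (INR K); auto. unfold Rdiv. rewrite Rmult_assoc, Rinv_l by lra. nra. }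
    assert (0 <= mu / INR K) by (apply Rlt_le, Rdiv_lt_0_compat; lra).
    assert (0 <= mu / INR K + (1 - mu) * (INR (s k) / INR N) <= 1) by nra.
    pose proof (pos_INR (s 0%nat)).
    assert (0 <= INR (s 0%nat) * lam <= INR N * lam) by nra.
    assert (0 <= INR (s 0%nat) * lam * (mu / INR K + (1 - mu) * (INR (s k) / INR N)) <= INR N * lam) by nra.
    nra.
  - replace (INR K * (INR K * (INR N * lam))) with (INR (length (arms K)) * (INR K * (INR N * lam))) by (unfold arms; rewrite length_seq; auto).
    apply sumR_le_const.
    intros k Hk. eapply Rle_trans. apply sumR_le_const with (M := INR N * lam).
    + intros k' Hk'. pose proof (p_arm K N lam mu p k H Hk). pose proof (Hle k Hk).
      pose proof (Hle k' (proj1 (proj1 (in_others K k k') Hk'))). unfold rate_sw.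
      assert (0 <= INR (s k) / INR N <= 1). { split. apply Rmult_le_pos. apply pos_INR. apply Rlt_le, Rinv_0_lt_compat; lra. apply div_le1; lra. }
      pose proof (pos_INR (s k')).
      assert (0 <= INR (s k') * lam <= INR N * lam) by nra.
      assert (0 <= INR (s k') * lam * (INR (s k) / INR N) <= INR N * lam) by nra. nra.
    + apply Rmult_le_compat_r. nra. replace (INR K) with (INR (length (arms K))) by (unfold arms; rewrite length_seq; auto).
      apply le_INR. unfold others. apply filter_length_le. Qed.

Definition pmin (p : nat -> R) (l : list nat) : R :=
  fold_right (fun k acc => if Rlt_dec 0 (p k) then Rmin (p k) acc else acc) 1 l.

Lemma pmin_prop p l : 0 < pmin p l <= 1 /\ forall k, In k l -> 0 < p k -> pmin p l <= p k.
Proof. induction l as [|a l IH]; simpl. split. lra. intros; contradiction.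
  destruct IH as [[H1 H2] H3]. destruct (Rlt_dec 0 (p a)).
  - split. split. apply Rmin_glb_lt; lra. pose proof (Rmin_r (p a) (pmin p l)). lra.
    intros k [<-|Hk] Hp. apply Rmin_l. pose proof (Rmin_r (p a) (pmin p l)). pose proof (H3 k Hk Hp). lra.
  - split. lra. intros k [<-|Hk] Hp. contradiction. auto. Qed.

Definition rho K N lam mu p := lam * mu * pmin p (arms K) / (INR K * INR N).
Definition beta K N lam mu p := Rmin 1 (rho K N lam mu p / Lam K N lam).

Lemma rho_pos K N lam mu p : Hyp K N lam mu p -> 0 < rho K N lam mu p.
Proof. intros H. pose proof H as (HK&HN&Hl&Hm&_). pose proof (pmin_prop p (arms K)) as [[? ?] _].
  pose proof (INR_K_pos K N lam mu p H). pose proof (INR_N_pos K N lam mu p H).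
  unfold rho. apply Rdiv_lt_0_compat. apply Rmult_lt_0_compat; [apply Rmult_lt_0_compat|]; lra. apply Rmult_lt_0_compat; lra. Qed.

Lemma Lam_pos K N lam mu p : Hyp K N lam mu p -> 0 < Lam K N lam.
Proof. intros H. pose proof H as (HK&HN&Hl&Hm&_).
  pose proof (INR_K_pos K N lam mu p H). pose proof (INR_N_pos K N lam mu p H).
  unfold Lam. assert (0 < INR N * lam) by nra. assert (0 < INR K * (INR N * lam)) by nra. nra. Qed.

Lemma beta_bounds K N lam mu p : Hyp K N lam mu p -> 0 < beta K N lam mu p <= 1.
Proof. intros H. pose proof (rho_pos K N lam mu p H). pose proof (Lam_pos K N lam mu p H).
  unfold beta. split. apply Rmin_glb_lt. lra. apply Rdiv_lt_0_compat; lra. apply Rmin_l. Qed.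

Lemma rho_in K N lam mu p s : Hyp K N lam mu p -> (1 <= s 0%nat)%nat -> rho K N lam mu p <= rate_in K N lam mu p s 1%nat.
Proof. intros H Hs. pose proof H as (HK&HN&Hl&Hm&Hp1&_). pose proof (pmin_prop p (arms K)) as [[? ?] H3].
  assert (pmin p (arms K) <= p 1%nat) by (apply H3; [apply in_arms; lia|lra]).
  pose proof (INR_K_pos K N lam mu p H). pose proof (INR_N_pos K N lam mu p H).
  assert (1 <= INR N) by (apply (le_INR 1); lia). assert (1 <= INR (s 0%nat)) by (apply (le_INR 1); lia).
  assert (0 <= (1 - mu) * (INR (s 1%nat) / INR N)).
  { apply Rmult_le_pos. lra. apply Rmult_le_pos. apply pos_INR. apply Rlt_le, Rinv_0_lt_compat; lra. }
  unfold rho, rate_in.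
  apply Rle_trans with (lam * mu * p 1%nat / INR K).
  - unfold Rdiv. rewrite Rinv_mult. 
    assert (0 < / INR K) by (apply Rinv_0_lt_compat; lra). assert (0 < / INR N <= 1).
    { split. apply Rinv_0_lt_compat; lra. rewrite <- Rinv_1. apply Rinv_le_contravar; lra. }
    assert (lam * mu * pmin p (arms K) <= lam * mu * p 1%nat).
    { apply Rmult_le_compat_l. nra. lra. }
    assert (0 <= lam * mu * pmin p (arms K)) by (apply Rmult_le_pos; [apply Rmult_le_pos|]; lra).
    set (X := lam * mu * pmin p (arms K)) in *.
    assert (0 <= X * / INR K) by (apply Rmult_le_pos; lra).
    assert (X * (/ INR K * / INR N) <= X * / INR K) by (rewrite <- Rmult_assoc; nra).
    assert (X * / INR K <= lam * mu * p 1%nat * / INR K) by (apply Rmult_le_compat_r; lra).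
    lra.
  - assert (mu / INR K <= mu / INR K + (1 - mu) * (INR (s 1%nat) / INR N)) by lra.
    assert (0 <= mu / INR K) by (apply Rlt_le, Rdiv_lt_0_compat; lra).
    assert (lam * (mu / INR K) * p 1%nat <= INR (s 0%nat) * lam * (mu / INR K + (1 - mu) * (INR (s 1%nat) / INR N)) * p 1%nat).
    { apply Rmult_le_compat_r. lra.
      set (B := mu / INR K + (1 - mu) * (INR (s 1%nat) / INR N)) in *.
      assert (lam * (mu / INR K) <= lam * B) by (apply Rmult_le_compat_l; lra).
      assert (0 <= lam * B) by (apply Rmult_le_pos; lra).
      assert (lam * B <= INR (s 0%nat) * (lam * B)) by nra. rewrite Rmult_assoc. lra. }
    replace (lam * mu * p 1%nat / INR K) with (lam * (mu / INR K) * p 1%nat) by (field; lra). lra. Qed.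

Lemma rho_sw K N lam mu p s k k' : Hyp K N lam mu p -> In k (arms K) -> 0 < p k -> (1 <= s k)%nat -> (1 <= s k')%nat ->
  rho K N lam mu p <= rate_sw N lam p s k k'.
Proof. intros H Hk Hpk Hs Hs'. pose proof H as (HK&HN&Hl&Hm&Hp1&_). pose proof (pmin_prop p (arms K)) as [[? ?] H3].
  assert (pmin p (arms K) <= p k) by auto.
  pose proof (INR_K_pos K N lam mu p H). pose proof (INR_N_pos K N lam mu p H).
  assert (1 <= INR K) by (apply (le_INR 1); lia).
  assert (1 <= INR (s k)) by (apply (le_INR 1); lia). assert (1 <= INR (s k')) by (apply (le_INR 1); lia).
  unfold rho, rate_sw.
  apply Rle_trans with (lam * pmin p (arms K) / INR N).
  - unfold Rdiv. rewrite Rinv_mult.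
    assert (0 < / INR K <= 1).
    { split. apply Rinv_0_lt_compat; lra. rewrite <- Rinv_1. apply Rinv_le_contravar; lra. }
    assert (0 < / INR N) by (apply Rinv_0_lt_compat; lra).
    assert (0 <= lam * pmin p (arms K) * / INR N) by (apply Rmult_le_pos; [nra|lra]).
    assert (lam * mu * pmin p (arms K) * (/ INR K * / INR N) = (lam * pmin p (arms K) * / INR N) * (mu * / INR K)) by ring.
    assert (mu * / INR K <= 1) by nra. nra.
  - replace (INR (s k') * lam * (INR (s k) / INR N) * p k) with ((INR (s k') * INR (s k) * p k) * (lam / INR N)) by (field; lra).
    replace (lam * pmin p (arms K) / INR N) with (pmin p (arms K) * (lam / INR N)) by (field; lra).
    apply Rmult_le_compat_r. apply Rlt_le, Rdiv_lt_0_compat; lra.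
    assert (1 <= INR (s k') * INR (s k)) by nra. nra. Qed.

Lemma step_bound K N lam mu p s r : Hyp K N lam mu p -> Inv K N s -> total_rate K N lam mu p s <> 0 -> rho K N lam mu p <= r ->
  beta K N lam mu p <= r / total_rate K N lam mu p s.
Proof. intros H Hs Ht Hr. pose proof (tot_nonneg K N lam mu p s H). pose proof (tot_le K N lam mu p s H Hs).
  pose proof (rho_pos K N lam mu p H). pose proof (Lam_pos K N lam mu p H).
  apply Rle_trans with (rho K N lam mu p / Lam K N lam). apply Rmin_r.
  apply Rle_trans with (rho K N lam mu p / total_rate K N lam mu p s).
  - unfold Rdiv. apply Rmult_le_compat_l. lra. apply Rinv_le_contravar; lra.
  - unfold Rdiv. apply Rmult_le_compat_r. apply Rlt_le, Rinv_0_lt_compat; lra. lra. Qed.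


Definition ind_abs K N lam mu p s : R := if Req_EM_T (total_rate K N lam mu p s) 0 then 1 else 0.

Lemma ind_abs_nonneg K N lam mu p s : 0 <= ind_abs K N lam mu p s.
Proof. unfold ind_abs. destruct (Req_EM_T _ 0); lra. Qed.

Lemma AA_abs K N lam mu p d s : total_rate K N lam mu p s = 0 -> Titer K N lam mu p d (ind_abs K N lam mu p) s = 1.
Proof. intros H. rewrite Titer_abs by auto. unfold ind_abs. destruct (Req_EM_T _ 0); [lra|contradiction]. Qed.

Lemma beta_pow K N lam mu p d : Hyp K N lam mu p -> 0 <= beta K N lam mu p ^ d <= 1.
Proof. intros H. pose proof (beta_bounds K N lam mu p H). split. apply pow_le; lra.
  rewrite <- (pow1 d). apply pow_incr. lra. Qed.

Lemma pathY K N lam mu p : Hyp K N lam mu p -> forall d k s, In k (arms K) -> 0 < p k -> Inv K N s -> s 0%nat = 0%nat ->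
  (1 <= s k)%nat -> (N - s k <= d)%nat -> beta K N lam mu p ^ d <= Titer K N lam mu p d (ind_abs K N lam mu p) s.
Proof. intros H d. induction d; intros k s Hk Hpk Hs H0 H1 Hd.
  - pose proof (beta_pow K N lam mu p 0 H).
    destruct (Req_EM_T (total_rate K N lam mu p s) 0) as [E|E]. rewrite AA_abs; lra.
    exfalso. apply E. apply tot_zero.
    + intros j _. unfold rate_in. rewrite H0. simpl. ring.
    + intros j j' Hj Hj'. apply in_others in Hj'. destruct Hj' as [Hj' Hne].
      apply in_arms in Hj, Hj', Hk.
      destruct (Nat.eq_dec j' k).
      * subst j'. assert (Hz : s j = 0%nat). { pose proof (inv_two K N s j k Hs ltac:(lia) ltac:(lia) ltac:(lia)). lia. }
        unfold rate_sw. rewrite Hz. simpl. field. apply Rgt_not_eq, (INR_N_pos K N lam mu p H).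
      * assert (Hz : s j' = 0%nat). { pose proof (inv_two K N s j' k Hs ltac:(lia) ltac:(lia) n). lia. }
        unfold rate_sw. rewrite Hz. simpl. ring.
  - pose proof (beta_bounds K N lam mu p H). pose proof (beta_pow K N lam mu p (S d) H).
    destruct (Req_EM_T (total_rate K N lam mu p s) 0) as [E|E]. rewrite AA_abs; lra.
    destruct (classic (exists k', In k' (others K k) /\ (1 <= s k')%nat)) as [[k' [Hk' Hs']]|Hno].
    + simpl Titer.
      assert (Hnext : beta K N lam mu p ^ d <= Titer K N lam mu p d (ind_abs K N lam mu p) (move s k k')).
      { pose proof Hk' as Hk'2. apply in_others in Hk'2. destruct Hk'2 as [Hk'a Hne]. apply in_arms in Hk'a. pose proof Hk as Hka. apply in_arms in Hka.
        apply (IHd k); auto.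
        - apply inv_move; auto; lia.
        - unfold move. destruct (Nat.eqb_spec 0 k); [lia|]. destruct (Nat.eqb_spec 0 k'); [lia|]. auto.
        - unfold move. rewrite Nat.eqb_refl. lia.
        - unfold move. rewrite Nat.eqb_refl. lia. }
      pose proof (rho_sw K N lam mu p s k k' H Hk Hpk H1 Hs') as Hr.
      pose proof (step_bound K N lam mu p s _ H Hs E Hr).
      pose proof (Top_ge_sw K N lam mu p (Titer K N lam mu p d (ind_abs K N lam mu p)) s k k' H
        (fun s' => Titer_nonneg K N lam mu p d _ s' H (ind_abs_nonneg K N lam mu p)) E Hk Hk').
      simpl pow. assert (0 <= beta K N lam mu p ^ d) by (apply pow_le; lra). nra.
    + exfalso. apply E. apply tot_zero.
      * intros j _. unfold rate_in. rewrite H0. simpl. ring.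
      * intros j j' Hj Hj'. pose proof Hj' as Hj'2. apply in_others in Hj'2. destruct Hj'2 as [Hj'a Hne].
        destruct (Nat.eq_dec j' k).
        -- subst j'. assert (Hz : s j = 0%nat).
           { destruct (s j) eqn:Ej; auto. exfalso. apply Hno. exists j. split. apply in_others. split; auto. lia. }
           unfold rate_sw. rewrite Hz. simpl. field. apply Rgt_not_eq, (INR_N_pos K N lam mu p H).
        -- assert (Hz : s j' = 0%nat).
           { destruct (s j') eqn:Ej; auto. exfalso. apply Hno. exists j'. split. apply in_others. split; auto. lia. }
           unfold rate_sw. rewrite Hz. simpl. ring. Qed.

Lemma pathX K N lam mu p : Hyp K N lam mu p -> forall d s, Inv K N s -> (1 <= s 0%nat \/ 1 <= s 1%nat)%nat ->
  (s 0%nat + (N - s 1%nat) <= d)%nat -> beta K N lam mu p ^ d <= Titer K N lam mu p d (ind_abs K N lam mu p) s.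
Proof. intros H d. pose proof H as (HK&HN&Hl&Hm&Hp1&_). induction d; intros s Hs Hor Hd.
  - assert (s 0%nat = 0%nat) by lia. apply (pathY K N lam mu p H 0 1); first [apply in_arms; lia | lra | lia | auto].
  - destruct (s 0%nat) as [|m] eqn:E0.
    + apply (pathY K N lam mu p H (S d) 1); first [apply in_arms; lia | lra | lia | auto].
    + pose proof (beta_bounds K N lam mu p H). pose proof (beta_pow K N lam mu p (S d) H).
      destruct (Req_EM_T (total_rate K N lam mu p s) 0) as [E|E]. rewrite AA_abs; lra.
      simpl Titer.
      assert (Hnext : beta K N lam mu p ^ d <= Titer K N lam mu p d (ind_abs K N lam mu p) (move s 1 0)).
      { apply IHd.
        - apply inv_move; auto; lia.
        - right. unfold move. simpl. lia.
        - unfold move. simpl. rewrite E0. simpl. lia. }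
      pose proof (rho_in K N lam mu p s H ltac:(lia)) as Hr.
      pose proof (step_bound K N lam mu p s _ H Hs E Hr).
      pose proof (Top_ge_in K N lam mu p (Titer K N lam mu p d (ind_abs K N lam mu p)) s 1 H
        (fun s' => Titer_nonneg K N lam mu p d _ s' H (ind_abs_nonneg K N lam mu p)) E ltac:(apply in_arms; lia)).
      simpl pow. assert (0 <= beta K N lam mu p ^ d) by (apply pow_le; lra). nra. Qed.

Lemma absorb K N lam mu p s : Hyp K N lam mu p -> Inv K N s -> total_rate K N lam mu p s <> 0 ->
  beta K N lam mu p ^ (2 * N) <= Titer K N lam mu p (2 * N) (ind_abs K N lam mu p) s.
Proof. intros H Hs E. pose proof H as (HK&HN&Hl&Hm&Hp1&_).
  pose proof (inv_le K N s 0 Hs ltac:(lia)).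
  destruct (classic (1 <= s 0%nat \/ 1 <= s 1%nat)%nat) as [Hor|Hno].
  - apply pathX; auto. lia.
  - assert (E0 : s 0%nat = 0%nat) by lia. assert (E1 : s 1%nat = 0%nat) by lia.
    destruct (classic (exists k, In k (arms K) /\ 0 < p k /\ (1 <= s k)%nat)) as [[k [Hk [Hpk Hsk]]]|Hno2].
    + apply (pathY K N lam mu p H _ k); auto. lia.
    + exfalso. apply E. apply tot_zero.
      * intros j _. unfold rate_in. rewrite E0. simpl. ring.
      * intros j j' Hj Hj'. pose proof (p_arm K N lam mu p j H Hj).
        destruct (s j) eqn:Ej.
        -- unfold rate_sw. rewrite Ej. simpl. field. apply Rgt_not_eq, (INR_N_pos K N lam mu p H).
        -- assert (p j = 0). { destruct (Rlt_dec 0 (p j)). exfalso; apply Hno2. exists j. repeat split; auto; lia. lra. }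
           unfold rate_sw. rewrite H2. ring. Qed.


Definition ind_nabs K N lam mu p s : R := 1 - ind_abs K N lam mu p s.

Lemma Titer_scal K N lam mu p n c f s : Titer K N lam mu p n (fun x => c * f x) s = c * Titer K N lam mu p n f s.
Proof. rewrite (Titer_ext _ _ _ _ _ n _ (fun x => c * f x + 0 * f x)) by (intros; ring).
  rewrite Titer_lin. ring. Qed.

Lemma BB_eq K N lam mu p n s : Titer K N lam mu p n (ind_nabs K N lam mu p) s = 1 - Titer K N lam mu p n (ind_abs K N lam mu p) s.
Proof. rewrite (Titer_ext _ _ _ _ _ n _ (fun x => 1 * (fun _ => 1) x + (-1) * ind_abs K N lam mu p x)) by (intros; unfold ind_nabs; ring).
  rewrite Titer_lin, Titer_const. ring. Qed.

Lemma ind_nabs_bounds K N lam mu p s : 0 <= ind_nabs K N lam mu p s <= 1.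
Proof. unfold ind_nabs, ind_abs. destruct (Req_EM_T _ 0); lra. Qed.

Definition eps K N lam mu p := beta K N lam mu p ^ (2 * N).

Lemma BL K N lam mu p s : Hyp K N lam mu p -> Inv K N s ->
  Titer K N lam mu p (2 * N) (ind_nabs K N lam mu p) s <= (1 - eps K N lam mu p) * ind_nabs K N lam mu p s.
Proof. intros H Hs. destruct (Req_EM_T (total_rate K N lam mu p s) 0) as [E|E].
  - rewrite Titer_abs by auto. unfold ind_nabs, ind_abs. destruct (Req_EM_T _ 0); [|contradiction]. lra.
  - rewrite BB_eq. pose proof (absorb K N lam mu p s H Hs E).
    assert (Hn : ind_nabs K N lam mu p s = 1).
    { unfold ind_nabs, ind_abs. destruct (Req_EM_T _ 0); [contradiction|]. lra. }
    rewrite Hn. unfold eps. lra. Qed.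

Lemma eps_bounds K N lam mu p : Hyp K N lam mu p -> 0 < eps K N lam mu p <= 1.
Proof. intros H. pose proof (beta_bounds K N lam mu p H). pose proof (beta_pow K N lam mu p (2 * N) H).
  unfold eps. split. apply pow_lt; lra. lra. Qed.

Lemma Bm K N lam mu p m s : Hyp K N lam mu p -> Inv K N s ->
  Titer K N lam mu p (m * (2 * N)) (ind_nabs K N lam mu p) s <= (1 - eps K N lam mu p) ^ m.
Proof. intros H. pose proof (eps_bounds K N lam mu p H). revert s. induction m; intros s Hs.
  - simpl. pose proof (ind_nabs_bounds K N lam mu p s). lra.
  - replace (S m * (2 * N))%nat with (m * (2 * N) + 2 * N)%nat by lia. rewrite Titer_add.
    apply Rle_trans with (Titer K N lam mu p (m * (2 * N)) (fun x => (1 - eps K N lam mu p) * ind_nabs K N lam mu p x) s).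
    + apply Titer_mono; auto. intros; apply BL; auto.
    + rewrite Titer_scal. simpl pow. apply Rmult_le_compat_l. lra. auto. Qed.

Lemma Top_nabs K N lam mu p s : Hyp K N lam mu p -> Inv K N s ->
  Top K N lam mu p (ind_nabs K N lam mu p) s <= ind_nabs K N lam mu p s.
Proof. intros H Hs. destruct (Req_EM_T (total_rate K N lam mu p s) 0) as [E|E].
  - rewrite Top_abs; auto. lra.
  - apply Rle_trans with (Top K N lam mu p (fun _ => 1) s).
    + apply Top_mono; auto. intros; apply ind_nabs_bounds.
    + rewrite Top_const. unfold ind_nabs, ind_abs. destruct (Req_EM_T _ 0); [contradiction|]. lra. Qed.

Lemma B_mono K N lam mu p n j s : Hyp K N lam mu p -> Inv K N s -> (j <= n)%nat ->
  Titer K N lam mu p n (ind_nabs K N lam mu p) s <= Titer K N lam mu p j (ind_nabs K N lam mu p) s.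
Proof. intros H Hs Hjn. induction Hjn. lra.
  eapply Rle_trans; [|exact IHHjn].
  replace (S m) with (m + 1)%nat by lia. rewrite Titer_add.
  apply Titer_mono; auto. intros s' Hs'. simpl. apply Top_nabs; auto. Qed.

Lemma target_of K N s : Inv K N s -> s 0%nat = 0%nat -> (forall k, (2 <= k <= K)%nat -> s k = 0%nat) -> (1 <= K)%nat -> is_target K N s = true.
Proof. intros Hs H0 Hk HK. pose proof (inv_split K N s HK Hs) as Hsp.
  rewrite (sumR_ext _ _ (fun _ => 0)) in Hsp. rewrite sumR_zero, H0 in Hsp. simpl INR in Hsp.
  2:{ intros i Hi. apply in_seq in Hi. rewrite Hk by lia. reflexivity. }
  assert (E1 : s 1%nat = N) by (apply INR_eq; lra).
  unfold is_target. apply forallb_forall. intros i Hi. apply in_seq in Hi. apply Nat.eqb_eq.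
  destruct (Nat.eqb_spec i 1). subst; auto. destruct i. auto. apply Hk. lia. Qed.

Lemma tgt_lb K N lam mu p s : Hyp K N lam mu p -> Inv K N s ->
  1 - GG K mu p s - ind_nabs K N lam mu p s <= ind_tgt K N s.
Proof. intros H Hs. pose proof H as (HK&HN&Hl&Hm&Hp1&_). pose proof (GG_nonneg K N lam mu p s H).
  assert (0 <= ind_tgt K N s) by (unfold ind_tgt; destruct (is_target K N s); lra).
  unfold ind_nabs, ind_abs. destruct (Req_EM_T (total_rate K N lam mu p s) 0) as [E|E]; [|lra].
  unfold ind_tgt. destruct (is_target K N s) eqn:T. lra.
  pose proof (rho_pos K N lam mu p H).
  assert (E0 : s 0%nat = 0%nat).
  { destruct (s 0%nat) eqn:E0; auto. exfalso. pose proof (rho_in K N lam mu p s H ltac:(lia)).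
    pose proof (tot_ge_in K N lam mu p s 1 H ltac:(apply in_arms; lia)). lra. }
  assert (E1 : s 1%nat = 0%nat).
  { destruct (s 1%nat) eqn:E1; auto. exfalso.
    assert (forall k, (2 <= k <= K)%nat -> s k = 0%nat).
    { intros k Hk. destruct (s k) eqn:Ek; auto. exfalso.
      pose proof (rho_sw K N lam mu p s 1 k H ltac:(apply in_arms; lia) ltac:(lra) ltac:(lia) ltac:(lia)).
      pose proof (tot_ge_sw K N lam mu p s 1 k H ltac:(apply in_arms; lia) ltac:(apply in_others; split; [apply in_arms|]; lia)). lra. }
    rewrite (target_of K N s) in T; try discriminate; auto; lia. }
  unfold GG. rewrite E0, E1. simpl. lra. Qed.

Lemma inv_init K N : Inv K N (init_state N).
Proof. unfold Inv. change (seq 0 (S K)) with (0%nat :: seq 1 K). rewrite sumR_cons.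
  rewrite (sumR_ext (seq 1 K) _ (fun _ => 0)). rewrite sumR_zero. unfold init_state. simpl. ring.
  intros i Hi. apply in_seq in Hi. unfold init_state. destruct (Nat.eqb_spec i 0). lia. reflexivity. Qed.

Lemma main_bound K N lam mu p n : Hyp K N lam mu p ->
  1 - GG K mu p (init_state N) - Titer K N lam mu p n (ind_nabs K N lam mu p) (init_state N) <= reach K N lam mu p n (init_state N).
Proof. intros H. rewrite reach_Tn. pose proof (inv_init K N).
  apply Rle_trans with (Titer K N lam mu p n (fun x => 1 * (fun y => 1 * (fun _ => 1) y + (-1) * GG K mu p y) x + (-1) * ind_nabs K N lam mu p x) (init_state N)).
  - rewrite Titer_lin. rewrite Titer_lin, Titer_const.
    pose proof (Titer_G K N lam mu p n (init_state N) H H0). lra.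
  - apply Titer_mono; auto. intros s' Hs'. pose proof (tgt_lb K N lam mu p s' H Hs'). lra. Qed.


Lemma exp_pow_nat x n : exp x ^ n = exp (x * INR n).
Proof. induction n. simpl. rewrite Rmult_0_r, exp_0. auto.
  rewrite S_INR. simpl pow. rewrite IHn. rewrite <- exp_plus. f_equal. ring. Qed.

Lemma exp_le x y : x <= y -> exp x <= exp y.
Proof. intros H. destruct (Rle_lt_or_eq_dec x y H). left; apply exp_increasing; auto. subst; lra. Qed.

Lemma e_gt2 : 2 < exp 1.
Proof. pose proof (exp_ineq1 1 ltac:(lra)). lra. Qed.

Lemma numeric K N lam mu p delta : Hyp K N lam mu p -> 0 < delta <= 1 ->
  aa K mu p ^ N <= Rpower (p 1%nat / p 2%nat) (- ((1 - delta) * (mu * p 1%nat / (INR K * exp 1)) * INR N))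
      + exp (- (mu * p 1%nat / (INR K * exp 1)) * (delta ^ 2 / 2) * INR N).
Proof. intros H Hd. pose proof H as (HK&HN&Hl&Hm&Hp1&_).
  pose proof (rr_bounds K N lam mu p H) as Hr. pose proof (aa_bounds K N lam mu p H).
  pose proof (p2_pos K N lam mu p H). pose proof (INR_K_pos K N lam mu p H).
  pose proof (pos_INR N) as HNp. pose proof e_gt2 as He.
  set (u := mu / INR K). assert (Hu : 0 < u) by (apply Rdiv_lt_0_compat; lra).
  set (r := rr p) in *.
  set (c := mu * p 1%nat / (INR K * exp 1)).
  assert (Hc : c = u * p 1%nat / exp 1) by (unfold c, u; field; lra).
  assert (Hc0 : 0 < c) by (rewrite Hc; apply Rdiv_lt_0_compat; [apply Rmult_lt_0_compat|]; lra).
  assert (HaN : aa K mu p ^ N <= exp (- (u * (1 - r)) * INR N)).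
  { rewrite <- exp_pow_nat. apply pow_incr. split. lra.
    pose proof (exp_ineq1_le (- (u * (1 - r)))). unfold aa in *. fold u. fold r. lra. }
  assert (E1 : 0 < Rpower (p 1%nat / p 2%nat) (- ((1 - delta) * c * INR N))) by (unfold Rpower; apply exp_pos).
  assert (E2 : 0 < exp (- c * (delta ^ 2 / 2) * INR N)) by apply exp_pos.
  destruct (Rle_dec (/ exp 1) r) as [Hre|Hre].
  -
    assert (Hq : p 1%nat / p 2%nat = / r) by (unfold r, rr; field; lra).
    assert (Hln : ln (p 1%nat / p 2%nat) <= exp 1 * (1 - r)).
    { rewrite Hq. pose proof (exp_ineq1_le (ln (/ r))). rewrite exp_ln in H3 by (apply Rinv_0_lt_compat; lra).
      assert (/ r <= exp 1).
      { rewrite <- (Rinv_inv (exp 1)). apply Rinv_le_contravar. apply Rinv_0_lt_compat; lra. auto. }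
      assert (/ r - 1 = (1 - r) * / r) by (field; lra).
      assert ((1 - r) * / r <= (1 - r) * exp 1) by (apply Rmult_le_compat_l; lra). lra. }
    assert (Hln0 : 0 <= ln (p 1%nat / p 2%nat)).
    { rewrite Hq. rewrite <- ln_1. apply ln_le. lra. rewrite <- Rinv_1. apply Rinv_le_contravar; lra. }
    assert ((1 - delta) * c * ln (p 1%nat / p 2%nat) <= u * (1 - r)).
    { apply Rle_trans with (c * ln (p 1%nat / p 2%nat)).
      assert (0 <= c * ln (p 1%nat / p 2%nat)) by (apply Rmult_le_pos; lra). nra.
      apply Rle_trans with (c * (exp 1 * (1 - r))). apply Rmult_le_compat_l; lra.
      rewrite Hc. replace (u * p 1%nat / exp 1 * (exp 1 * (1 - r))) with (u * (1 - r) * p 1%nat) by (field; lra).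
      assert (0 <= u * (1 - r)) by (apply Rmult_le_pos; lra). nra. }
    assert (exp (- (u * (1 - r)) * INR N) <= Rpower (p 1%nat / p 2%nat) (- ((1 - delta) * c * INR N))).
    { unfold Rpower. apply exp_le.
      replace (- ((1 - delta) * c * INR N) * ln (p 1%nat / p 2%nat)) with (- ((1 - delta) * c * ln (p 1%nat / p 2%nat)) * INR N) by ring.
      apply Rmult_le_compat_r; lra. }
    lra.
  - assert (Hre' : r < / exp 1) by lra.
    assert (/ exp 1 < 1/2).
    { replace (1/2) with (/ 2) by field. apply Rinv_lt_contravar; lra. }
    assert (c * (delta ^ 2 / 2) <= u * (1 - r)).
    { assert (delta ^ 2 <= 1) by (simpl; nra).
      assert (c * (delta ^ 2 / 2) <= c / 2) by nra.
      assert (c <= u / exp 1).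
      { rewrite Hc. unfold Rdiv. apply Rmult_le_compat_r. left; apply Rinv_0_lt_compat; lra. nra. }
      assert (u / exp 1 <= u * (1/2)). { unfold Rdiv. apply Rmult_le_compat_l; lra. }
      assert (u * (1 / 2) <= u * (1 - r) * 2 * (1/2)).
      { apply Rmult_le_compat_r. lra. nra. }
      nra. }
    assert (exp (- (u * (1 - r)) * INR N) <= exp (- c * (delta ^ 2 / 2) * INR N)).
    { apply exp_le. replace (- c * (delta ^ 2 / 2) * INR N) with (- (c * (delta ^ 2 / 2)) * INR N) by ring.
      apply Rmult_le_compat_r; lra. }
    lra. Qed.


Theorem theorem1 (K N : nat) (lam mu delta : R) (p : nat -> R) :
  (2 <= K)%nat ->
  (1 <= N)%nat ->
  0 < lam ->
  0 < mu <= 1 ->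
  0 < delta <= 1 ->
  0 < p 1%nat <= 1 ->
  p 2%nat <> 0 ->
  p 1%nat > p 2%nat ->
  (forall k, (2 <= k)%nat -> (k < K)%nat -> p k >= p (S k)) ->
  p K >= 0 ->
  success_prob K N lam mu p >=
    1 - Rpower (p 1%nat / p 2%nat)
              (- ((1 - delta) * (mu * p 1%nat / (INR K * exp 1)) * INR N))
      - exp (- (mu * p 1%nat / (INR K * exp 1)) * (delta ^ 2 / 2) * INR N).
Proof.
  intros HK HN Hl Hm Hd Hp1 Hp2 H12 Hmon HpK.
  assert (H : Hyp K N lam mu p) by (repeat split; auto; lra).
  pose proof (numeric K N lam mu p delta H Hd) as Hnum.
  set (u := fun n => reach K N lam mu p n (init_state N)).
  set (G0 := GG K mu p (init_state N)).
  assert (HG0 : G0 = aa K mu p ^ N) by (unfold G0, GG, init_state; simpl; ring).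
  pose proof (inv_init K N) as Hinit.
  assert (Hu01 : forall n, 0 <= u n <= 1).
  { intros n. unfold u. rewrite reach_Tn. split.
    - apply Titer_nonneg; auto. intros; unfold ind_tgt; destruct (is_target K N s'); lra.
    - rewrite <- (Titer_const K N lam mu p n 1 (init_state N)). apply Titer_mono; auto.
      intros; unfold ind_tgt; destruct (is_target K N s'); lra. }
  pose proof (eps_bounds K N lam mu p H) as Heps.
  assert (Hm_bound : forall m, Rbar_le (1 - G0 - (1 - eps K N lam mu p) ^ m) (Lim_seq u)).
  { intros m. rewrite <- Lim_seq_const. apply Lim_seq_le_loc. exists (m * (2 * N))%nat. intros n Hn.
    pose proof (main_bound K N lam mu p n H).
    pose proof (B_mono K N lam mu p n (m * (2 * N)) (init_state N) H Hinit Hn).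
    pose proof (Bm K N lam mu p m (init_state N) H Hinit). unfold u, G0 in *. lra. }
  assert (Hfin : exists l, Lim_seq u = Finite l).
  { assert (A1 : Rbar_le (Lim_seq u) 1).
    { rewrite <- (Lim_seq_const 1). apply Lim_seq_le_loc. exists 0%nat. intros n _. apply Hu01. }
    assert (A0 : Rbar_le 0 (Lim_seq u)).
    { rewrite <- (Lim_seq_const 0). apply Lim_seq_le_loc. exists 0%nat. intros n _. apply Hu01. }
    destruct (Lim_seq u) as [l| |]; simpl in *; try contradiction. eauto. }
  destruct Hfin as [l Hl'].
  unfold success_prob. fold u. rewrite Hl'. simpl real.
  assert (Hl1 : 1 - G0 <= l).
  { destruct (Rle_dec (1 - G0) l) as [ok|nok]; auto. exfalso.
    assert (Habs : Rabs (1 - eps K N lam mu p) < 1) by (rewrite Rabs_pos_eq; lra).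
    destruct (pow_lt_1_zero _ Habs (1 - G0 - l) ltac:(lra)) as [M HM].
    specialize (HM M (le_n M)). specialize (Hm_bound M). rewrite Hl' in Hm_bound. simpl in Hm_bound.
    rewrite Rabs_pos_eq in HM by (apply pow_le; lra). lra. }
  lra.
Qed.
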